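(* Let $1\le a\le b\le n$, $h\in H_{n,\varpi_a}$ and $E\in B(\varpi_a)$. Write $$t^{\ell(u_E)}(T_{u_E^{-1}})^{-1}h=\sum_{F\in B(\varpi_b)}T_{u_F}h_F\qquad\text{with } h_F\in H_{n,\varpi_b}.$$ If $F\otimes E$ is not semistandard, then $h_F=0$.
   Context: Fix $n\ge1$, $[n]=\{1,\dots,n\}$. $S_n$ with simple transpositions $s_i$ and length $\ell(\cdot)$ acts on $\mathbb Z^n$ by permuting coordinates; $\varpi_k=\varepsilon_1+\dots+\varepsilon_k$; $S_{n,\lambda}$ is the stabilizer of $\lambda$. $H_n$ is the Iwahori–Hecke algebra of $S_n$ over $\mathbb Z[t^{\pm1}]$: generators $T_1,\dots,T_{n-1}$ with $T_i^2=(t-1)T_i+t$, $T_iT_{i+1}T_i=T_{i+1}T_iT_{i+1}$, $T_iT_j=T_jT_i$ ($|i-j|>1$); $T_w=T_{i_1}\cdots T_{i_m}$ for a reduced word; $\{T_w\}$ is a basis; $H_{n,\lambda}=\mathrm{span}\{T_w:w\in S_{n,\lambda}\}$. Every element of $H_n$ has a unique expression $\sum_{F\in B(\varpi_b)}T_{u_F}h_F$ with $h_F\in H_{n,\varpi_b}$. Columns: $B(\varpi_\ell)$ is the set of $C=(c_1<\dots<c_\ell)\subseteq[n]$; $u_C\in S_n$ sends $k\mapsto c_k$ ($k\le\ell$) and $\ell+1,\dots,n$ increasingly onto $[n]\setminus C$. For $F\in B(\varpi_b)$, $E\in B(\varpi_a)$, $a\le b$, $F\otimes E$ is the two-column filling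 with left column $F$ and right column $E$; it is semistandard iff $f_i\le e_i$ for all $i\in[a]$. *)

(* Defs.v *)
From HB Require Import structures.
From mathcomp Require Import all_boot all_order fingroup perm all_algebra fraction.
Set Implicit Arguments. Unset Strict Implicit. Unset Printing Implicit Defensive.
Import Order.TTheory GRing.Theory Num.Theory.
Local Open Scope ring_scope.

(* ---------- Coefficients: Z[t^{+-1}] inside the field Q(t) = Frac(Z[t]) ---------- *)
Notation K := {fraction {poly int}}.
Notation "p %:F" := (@FracField.tofrac _ p) : ring_scope.
Definition tt : K := ('X : {poly int})%:F.
Definition laurent (x : K) : Prop :=
  exists (k : nat) (p : {poly int}), x * tt ^+ k = p%:F.

(* composition of permutations as functions: (comp u v) k = u (v k) *)
Definition comp n (u v : 'S_n) : 'S_n := (v * u)%g.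

(* simple transposition s_{i+1} (0-based: swaps i and i+1), for i.+1 < n *)
Definition sref n (i : nat) : 'S_n :=
  match @insub _ (fun k => k < n)%N _ i, @insub _ (fun k => k < n)%N _ i.+1 with
  | Some j, Some j' => tperm j j'
  | _, _ => 1%g
  end.

Definition len n (w : 'S_n) : nat :=
  #|[set p : 'I_n * 'I_n | (p.1 < p.2)%N && (w p.2 < w p.1)%N]|.

(* a reduced word for w, obtained by repeatedly stripping right descents:
   w = (w s_i) s_i with len (w s_i) = len w - 1 *)
Fixpoint redword_fuel n (fuel : nat) (w : 'S_n) : seq nat :=
  match fuel with
  | 0 => [::]
  | f.+1 =>
    match [pick p : 'I_n * 'I_n | (p.2 == p.1.+1 :> nat) && (w p.2 < w p.1)%N] with
    | Some p => rcons (redword_fuel f (comp w (sref n p.1))) (nat_of_ord p.1)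
    | None => [::]
    end
  end.
Definition redword n (w : 'S_n) : seq nat := redword_fuel (n * n) w.

(* ---------- The Iwahori-Hecke algebra H_n, free on {T_w : w in S_n} ---------- *)
Notation H n := {ffun 'S_n -> K}.

Definition hsc n (c : K) (f : H n) : H n := [ffun v => c * f v].

Definition T n (w : 'S_n) : H n := [ffun v => (v == w)%:R].

Definition Ti_act n (i : nat) (h : H n) : H n :=
  \sum_(w : 'S_n) hsc (h w)
    (if (len w < len (comp (sref n i) w))%N then T (comp (sref n i) w)
     else hsc (tt - 1) (T w) + hsc tt (T (comp (sref n i) w))).

Definition Tw_act n (w : 'S_n) (h : H n) : H n := foldr (@Ti_act n) h (redword w).

Definition hmul n (f g : H n) : H n := \sum_(w : 'S_n) hsc (f w) (Tw_act w g).
Definition hone n : H n := T 1%g.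

Definition laurentH n (h : H n) : Prop := forall w, laurent (h w).

(* the stabilizer of varpi_k = e_1 + ... + e_k: permutations preserving {1..k} *)
Definition stab_varpi n (k : nat) (w : 'S_n) : bool :=
  [forall j : 'I_n, (j < k)%N == (w j < k)%N].
Definition Hpar n (k : nat) (h : H n) : Prop :=
  forall w, ~~ stab_varpi k w -> h w = 0.

Definition col_seq n (C : {set 'I_n}) : seq 'I_n :=
  [seq x <- enum 'I_n | x \in C] ++ [seq x <- enum 'I_n | x \notin C].

Lemma col_seq_size n (C : {set 'I_n}) : size (col_seq C) = n.
Proof.
rewrite /col_seq size_cat !size_filter count_predC size_enum_ord //.
Qed.

Lemma col_seq_uniq n (C : {set 'I_n}) : uniq (col_seq C).
Proof.
rewrite /col_seq cat_uniq; apply/and3P; split; try exact/filter_uniq/enum_uniq.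
apply/hasPn => x; rewrite !mem_filter => /andP[xC _].
by rewrite (negbTE xC).
Qed.

Definition uC_fun n (C : {set 'I_n}) (k : 'I_n) : 'I_n := nth k (col_seq C) k.

Lemma uC_fun_inj n (C : {set 'I_n}) : injective (uC_fun C).
Proof.
move=> i j; rewrite /uC_fun => e.
have ej : nth j (col_seq C) j = nth i (col_seq C) j.
  by apply: set_nth_default; rewrite col_seq_size.
apply/val_inj/eqP; rewrite -(nth_uniq i _ _ (col_seq_uniq C)) ?col_seq_size //.
  by rewrite e ej.
all: by rewrite ?col_seq_size ltn_ord.
Qed.

(* u_C : k |-> c_k (k <= |C|), and the remaining indices increasingly onto [n] \ C *)
Definition uC n (C : {set 'I_n}) : 'S_n := perm (@uC_fun_inj n C).

Definition centry n (C : {set 'I_n}) (i : nat) (d : 'I_n) : 'I_n :=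
  nth d [seq x <- enum 'I_n | x \in C] i.

(* F (x) E (F left column, E right column, |E| <= |F|) is semistandard iff f_i <= e_i, i in [|E|] *)
Definition semistandard n (F E : {set 'I_n}) : Prop :=
  forall (i : nat) (d : 'I_n), (i < #|E|)%N -> (centry F i d <= centry E i d)%N.

(* Main.v *)
Require Import Defs.
From mathcomp Require Import all_boot all_order fingroup perm all_algebra fraction.
From mathcomp Require Import zify ring.
Set Implicit Arguments. Unset Strict Implicit. Unset Printing Implicit Defensive.
Import GRing.Theory.

Notation pcomp := Defs.comp.

Section Perm.
Variable n : nat.
Implicit Types (w v y z : 'S_n).

Definition sv (i k : nat) : nat := if k == i then i.+1 else if k == i.+1 then i else k.

Lemma sref_val i (k : 'I_n) : i.+1 < n -> val (sref n i k) = sv i k.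
Proof.
move=> hi; rewrite /sref.
case: insubP => [j _ ej|]; last by rewrite /=; lia.
case: insubP => [j' _ ej'|]; last by rewrite /=; lia.
rewrite /sv; case: tpermP => [->|->|h1 h2].
- by rewrite ej ej' eqxx.
- by rewrite ej ej' eqxx ifN //; lia.
- have h1' : (val k == i) = false by apply/negP => /eqP e; apply: h1; apply: val_inj; rewrite e.
  have h2' : (val k == i.+1) = false by apply/negP => /eqP e; apply: h2; apply: val_inj; rewrite e.
  by rewrite h1' h2'.
Qed.

Lemma comp_val w v k : pcomp w v k = w (v k).
Proof. by rewrite /Defs.comp permM. Qed.

Lemma sref_inv i : i.+1 < n -> pcomp (sref n i) (sref n i) = 1%g.
Proof.
move=> hi; apply/permP => k; apply: val_inj; rewrite comp_val perm1 !sref_val //.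
rewrite /sv; case: (eqVneq (val k) i) => [->|h1] /=.
  by rewrite eqxx ifN // neq_ltn ltnSn orbT.
case: (eqVneq (val k) i.+1) => [->|h2] /=; first by rewrite eqxx.
by rewrite (negbTE h1) (negbTE h2).
Qed.

Lemma compA u v w : pcomp u (pcomp v w) = pcomp (pcomp u v) w.
Proof. by rewrite /Defs.comp mulgA. Qed.
Lemma comp1 w : pcomp w 1 = w. Proof. by rewrite /Defs.comp mul1g. Qed.
Lemma comp1l w : pcomp 1 w = w. Proof. by rewrite /Defs.comp mulg1. Qed.


Lemma lenE w : len w = \sum_(p : 'I_n * 'I_n) ((p.1 < p.2) && (w p.2 < w p.1)).
Proof.
rewrite /len -sum1_card big_mkcond /=; apply: eq_bigr => p _.
by rewrite inE; case: ifP.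
Qed.

Lemma sv_lt i p q : ~~ ((p == i) && (q == i.+1)) -> ~~ ((p == i.+1) && (q == i)) ->
  (sv i p < sv i q) = (p < q).
Proof.
rewrite /sv; move=> h1 h2.
case: (p =P i) h1 h2 => e1; case: (q =P i) => e2; case: (p =P i.+1) => e3;
  case: (q =P i.+1) => e4 /= h1 h2; lia.
Qed.

Section RS.
Variable i : nat.
Hypothesis hi : i.+1 < n.
Let oi : 'I_n := Ordinal (ltnW hi).
Let oi1 : 'I_n := Ordinal hi.
Let s := sref n i.

Lemma s_oi : s oi = oi1.
Proof. by apply: val_inj; rewrite sref_val //= /sv eqxx. Qed.
Lemma s_oi1 : s oi1 = oi.
Proof. by apply: val_inj; rewrite sref_val //= /sv eqxx ifN //; lia. Qed.
Lemma ss k : s (s k) = k.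
Proof. by rewrite -comp_val sref_inv // perm1. Qed.

Lemma lenRS w : len (pcomp w s) + (w oi1 < w oi) = len w + (w oi < w oi1).
Proof.
rewrite !lenE.
have hinj : injective (fun p : 'I_n * 'I_n => (s p.1, s p.2)).
  by move=> [p1 p2] [q1 q2] /= [/(congr1 s) e1 /(congr1 s) e2]; rewrite !ss in e1 e2; rewrite e1 e2.
rewrite (reindex_inj hinj) /=.
have d12 : (oi, oi1) != (oi1, oi).
  by apply/negP => /eqP [] e _; lia.
rewrite (bigD1 (oi, oi1)) //= (bigD1 (oi1, oi)) //=.
rewrite [in RHS](bigD1 (oi, oi1)) //= [in RHS](bigD1 (oi1, oi)) //=.
rewrite !comp_val !ss s_oi s_oi1 /=.
have -> : \sum_(p | (p != (oi, oi1)) && (p != (oi1, oi)))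
           ((s p.1 < s p.2) && (pcomp w s (s p.2) < pcomp w s (s p.1))) =
         \sum_(p | (p != (oi, oi1)) && (p != (oi1, oi)))
           ((p.1 < p.2) && (w p.2 < w p.1)).
  apply: eq_bigr => [[p q]] /andP [h1 h2] /=.
  by rewrite !comp_val !ss !sref_val // sv_lt //.
have : w oi != w oi1 by rewrite (inj_eq perm_inj); apply/eqP => /(congr1 val) /=; lia.
rewrite /= -!val_eqE /=; set S := \sum_(_ | _) _; move: (w oi) (w oi1) => a1 a2.
rewrite ltnSn ltnNge leqnSn /=; lia.
all: by rewrite eq_sym.
Qed.

End RS.

Lemma len_inv w : len (w^-1)%g = len w.
Proof.
rewrite !lenE.
have hinj : injective (fun p : 'I_n * 'I_n => (w p.2, w p.1)).
  by move=> [p1 p2] [q1 q2] /= [/perm_inj e1 /perm_inj e2]; rewrite e1 e2.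
rewrite (reindex_inj hinj) /=; apply: eq_bigr => p _; rewrite !permK andbC //.
Qed.

Lemma len_le w : len w <= n * n.
Proof. by rewrite /len; apply: leq_trans (max_card _) _; rewrite card_prod card_ord. Qed.

Lemma inv_comp u v : ((pcomp u v)^-1)%g = pcomp (v^-1)%g (u^-1)%g.
Proof. by rewrite /Defs.comp invMg. Qed.


Lemma sref_invg i : i.+1 < n -> ((sref n i)^-1)%g = sref n i.
Proof.
move=> hi; apply/permP => k; apply: (@perm_inj _ (sref n i)).
by rewrite permKV -comp_val sref_inv // perm1.
Qed.

Lemma lenLS i (hi : i.+1 < n) y :
  len (pcomp (sref n i) y) + ((y^-1)%g (Ordinal hi) < (y^-1)%g (Ordinal (ltnW hi)))
  = len y + ((y^-1)%g (Ordinal (ltnW hi)) < (y^-1)%g (Ordinal hi)).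
Proof.
by rewrite -len_inv inv_comp sref_invg // lenRS // len_inv.
Qed.

Lemma no_desc w : (forall i (hi : i.+1 < n), w (Ordinal (ltnW hi)) < w (Ordinal hi)) -> w = 1%g.
Proof.
move=> H.
have ge : forall k (hk : k < n), k <= w (Ordinal hk).
  elim=> [//|k IH] hk.
  have := H k hk; have := IH (ltnW hk).
  lia.
have hsum : \sum_(k : 'I_n) val (w k) = \sum_(k : 'I_n) val k.
  by rewrite [RHS](reindex_inj (@perm_inj _ w)).
apply/permP => k; apply: val_inj; rewrite perm1 /=; apply/eqP; rewrite eqn_leq.
have := ge k (ltn_ord k); rewrite (_ : Ordinal (ltn_ord k) = k); last exact: val_inj.
move=> -> ; rewrite andbT leqNgt; apply/negP => lt.
move: hsum; rewrite (bigD1 k) //= [in RHS](bigD1 k) //=.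
have : \sum_(j | j != k) val j <= \sum_(j | j != k) val (w j).
  apply: leq_sum => j _; have := ge j (ltn_ord j).
  by rewrite (_ : Ordinal (ltn_ord j) = j); last exact: val_inj.
move=> /= h1 h2; lia.
Qed.

Lemma desc_len w i (hi : i.+1 < n) : w (Ordinal hi) < w (Ordinal (ltnW hi)) ->
  len (pcomp w (sref n i)) + 1 = len w.
Proof.
move=> d; have := lenRS hi w; rewrite d.
have : ~~ (w (Ordinal (ltnW hi)) < w (Ordinal hi)) by rewrite -leqNgt ltnW.
by move/negbTE => -> /=; rewrite addn0.
Qed.

Lemma word_ind (P : 'S_n -> seq nat -> Prop) :
  P 1%g [::] ->
  (forall w i l (hi : i.+1 < n), w (Ordinal hi) < w (Ordinal (ltnW hi)) ->
     len (pcomp w (sref n i)) + 1 = len w -> P (pcomp w (sref n i)) l -> P w (rcons l i)) ->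
  forall w, P w (redword w).
Proof.
move=> P1 PS w; rewrite /redword.
suff : forall f w, len w <= f -> P w (redword_fuel f w) by apply; apply: len_le.
elim=> [|f IH] {}w hf /=.
  suff -> : w = 1%g by [].
  apply: no_desc => i hi; rewrite ltnNge; apply/negP => le.
  have : w (Ordinal hi) != w (Ordinal (ltnW hi)) by rewrite (inj_eq perm_inj) -val_eqE /= neq_ltn ltnSn orbT.
  rewrite neq_ltn => /orP [d|d]; first by have := desc_len d; lia.
  by move: le; rewrite leqNgt d.
case: pickP => [p /andP [/eqP e d]|none].
  have hi : p.1.+1 < n by rewrite -e.
  have ep2 : p.2 = Ordinal hi by apply: val_inj.
  have ep1 : p.1 = Ordinal (ltnW hi) by apply: val_inj.
  have d' : w (Ordinal hi) < w (Ordinal (ltnW hi)) by rewrite -ep2 -ep1.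
  apply: (PS _ _ _ hi d' (desc_len d')).
  by apply: IH; have := desc_len d'; lia.
suff -> : w = 1%g by [].
apply: no_desc => i hi; rewrite ltnNge; apply/negP => le.
have : w (Ordinal hi) != w (Ordinal (ltnW hi)) by rewrite (inj_eq perm_inj) -val_eqE /= neq_ltn ltnSn orbT.
rewrite neq_ltn => /orP [d|d]; last by move: le; rewrite leqNgt d.
by have := none (Ordinal (ltnW hi), Ordinal hi); rewrite /= eqxx d.
Qed.


Lemma len_sub u v : len (pcomp u v) <= len u + len v.
Proof.
move: u v; apply: (@word_ind (fun u _ => forall v, len (pcomp u v) <= len u + len v)) => [|u i l hi d hl IH] v /=; first by rewrite comp1l leq_addl.
have -> : pcomp u v = pcomp (pcomp u (sref n i)) (pcomp (sref n i) v).
  by rewrite compA -(compA u) sref_inv // comp1.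
apply: leq_trans (IH _) _.
have := lenLS hi v; lia.
Qed.

Lemma lenLS_ne i (hi : i.+1 < n) y : len (pcomp (sref n i) y) != len y.
Proof.
have := lenLS hi y.
case: (ltngtP ((y^-1)%g (Ordinal hi)) ((y^-1)%g (Ordinal (ltnW hi)))) => [d|d|/val_inj/perm_inj]; last by move/(congr1 val) => /=; lia.
  by move=> /=; lia.
by move=> /=; lia.
Qed.

Lemma add_step w i (hi : i.+1 < n) y :
  len (pcomp w (sref n i)) + 1 = len w ->
  len (pcomp w y) = len w + len y ->
  [/\ len (pcomp (sref n i) y) = len y + 1,
      (y^-1)%g (Ordinal (ltnW hi)) < (y^-1)%g (Ordinal hi) &
      len (pcomp (pcomp w (sref n i)) (pcomp (sref n i) y)) =
        len (pcomp w (sref n i)) + len (pcomp (sref n i) y)].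
Proof.
move=> h1 h2.
have e : pcomp (pcomp w (sref n i)) (pcomp (sref n i) y) = pcomp w y.
  by rewrite compA -(compA w) sref_inv // comp1.
have := len_sub (pcomp w (sref n i)) (pcomp (sref n i) y); rewrite e => h3.
have := lenLS hi y.
case: (ltngtP ((y^-1)%g (Ordinal hi)) ((y^-1)%g (Ordinal (ltnW hi)))) => [d|d|/val_inj/perm_inj]; last by move/(congr1 val) => /=; lia.
  by move=> /=; lia.
move=> /= h4.
by split; rewrite ?e; lia.
Qed.

End Perm.

Section Hecke.
Variable n : nat.
Local Open Scope ring_scope.
Implicit Types (w v y z : 'S_n) (g h : H n).

Lemma hscE c g v : hsc c g v = c * g v. Proof. by rewrite ffunE. Qed.
Lemma TE w v : T w v = (v == w)%:R. Proof. by rewrite ffunE. Qed.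

Lemma comp_ne i (hi : (i.+1 < n)%N) v : pcomp (sref n i) v != v.
Proof.
apply/eqP => /permP /(_ ((v^-1)%g (Ordinal (ltnW hi)))).
rewrite comp_val permKV => /(congr1 val); rewrite sref_val //= /sv eqxx; lia.
Qed.

Lemma Ti_actE i (hi : (i.+1 < n)%N) g v :
  Ti_act i g v = if (len (pcomp (sref n i) v) < len v)%N
                 then g (pcomp (sref n i) v) + (tt - 1) * g v
                 else tt * g (pcomp (sref n i) v).
Proof.
have ss : pcomp (sref n i) (pcomp (sref n i) v) = v by rewrite compA sref_inv // comp1l.
have ne := comp_ne hi v.
rewrite /Ti_act sum_ffunE (bigD1 v) //= (bigD1 (pcomp (sref n i) v)) //=.
rewrite big1 => [|w /andP [w1 w2]]; last first.
  have vw : (v == w) = false by rewrite eq_sym (negbTE w1).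
  have vsw : (v == pcomp (sref n i) w) = false.
    by apply/negP => /eqP e; move: w2; rewrite e compA sref_inv // comp1l eqxx.
  rewrite hscE; case: ifP => _; rewrite ?ffunE ?hscE ?TE ?vw ?vsw /= ?mulr0n ?mulr0 ?addr0 //.
  by rewrite mulr0.
rewrite ss addr0 !hscE.
have hne := lenLS_ne hi v.
case: ltngtP hne => //= hl _.
  rewrite ?ffunE ?hscE ?TE eqxx eq_sym (negbTE ne).
  by rewrite mulr0 add0r mulr0 add0r mulr1 mulrC.
- rewrite !ffunE eqxx eq_sym (negbTE ne) /=.
  by rewrite mulr0 addr0 mulr1 mulr1 addrC mulrC.
Qed.

Lemma tt_neq0 : tt != 0.
Proof. by rewrite /tt tofrac_eq0 polyX_eq0. Qed.

Lemma Ti_quad i (hi : (i.+1 < n)%N) g v :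
  tt * g v = Ti_act i (Ti_act i g) v - (tt - 1) * Ti_act i g v.
Proof.
have ss : pcomp (sref n i) (pcomp (sref n i) v) = v by rewrite compA sref_inv // comp1l.
rewrite !Ti_actE // ss.
have hne := lenLS_ne hi v.
case: ltngtP hne => //= hl _; rewrite ?(ltnNge (len v)) ?(ltnW hl) //=; ring.
Qed.

Lemma Ti_supp i (hi : (i.+1 < n)%N) g v :
  Ti_act i g v != 0 -> g v != 0 \/ g (pcomp (sref n i) v) != 0.
Proof.
rewrite Ti_actE //; case: (eqVneq (g v) 0) => [->|]; last by left.
case: (eqVneq (g (pcomp (sref n i) v)) 0) => [->|]; last by right.
by rewrite !mulr0 addr0; case: ifP; rewrite ?eqxx.
Qed.

Lemma Ti_supp_inv i (hi : (i.+1 < n)%N) g v :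
  g v != 0 -> Ti_act i g v != 0 \/ Ti_act i g (pcomp (sref n i) v) != 0.
Proof.
case: (eqVneq (Ti_act i g v) 0) => [e1|]; last by left.
case: (eqVneq (Ti_act i g (pcomp (sref n i) v)) 0) => [e2|]; last by right.
have e3 : Ti_act i (Ti_act i g) v = 0.
  by apply/eqP/negPn/negP => /(Ti_supp hi) []; rewrite ?e1 ?e2 eqxx.
have := Ti_quad hi g v; rewrite e3 e1 mulr0 subr0 => /eqP.
by rewrite mulf_eq0 (negbTE tt_neq0) /= => ->.
Qed.

End Hecke.

Section Dom.
Variables (n a : nat).
Implicit Types (w v y z : 'S_n).

Definition Nc z c := \sum_(k : 'I_n) ((k < a) && (z k < c)).
Definition Dm z y := forall c, Nc y c <= Nc z c.

Lemma Nc_succ z c (hc : c < n) : Nc z c.+1 = Nc z c + (((z^-1)%g (Ordinal hc)) < a).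
Proof.
rewrite /Nc.
have -> : \sum_(k : 'I_n) ((k < a) && (z k < c.+1)) =
          \sum_(k : 'I_n) (((k < a) && (z k < c)) + ((k < a) && (z k == Ordinal hc))).
  apply: eq_bigr => k _.
  have -> : (z k == Ordinal hc) = (nat_of_ord (z k) == c) by rewrite -val_eqE.
  case: (k < a) => //=; rewrite ltnS; case: ltngtP => //= h; rewrite ?addn0 ?add0n ?ltnNge ?ltnW //.
rewrite big_split /=; congr addn.
rewrite (bigD1 ((z^-1)%g (Ordinal hc))) //= permKV eqxx andbT big1 ?addn0 //.
move=> k hk; case: eqP => [e|]; last by rewrite andbF.
by move: hk; rewrite -e permK eqxx.
Qed.

Lemma Nc_s i (hi : i.+1 < n) z c : c != i.+1 -> Nc (pcomp (sref n i) z) c = Nc z c.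
Proof.
move/eqP=> hc; rewrite /Nc; apply: eq_bigr => k _; rewrite comp_val sref_val //.
congr (_ && _); rewrite /sv.
case: (nat_of_ord (z k) =P i) => [->|e1]; first by apply/idP/idP => h; lia.
case: (nat_of_ord (z k) =P i.+1) => [->|e2] //.
by apply/idP/idP => h; lia.
Qed.


Lemma inv_sy i (hi : i.+1 < n) y :
  ((pcomp (sref n i) y)^-1)%g (Ordinal (ltnW hi)) = (y^-1)%g (Ordinal hi) /\
  ((pcomp (sref n i) y)^-1)%g (Ordinal hi) = (y^-1)%g (Ordinal (ltnW hi)).
Proof. by rewrite inv_comp sref_invg // !comp_val s_oi s_oi1. Qed.

Lemma dom_step i (hi : i.+1 < n) y z : Dm z y ->
  ((y^-1)%g (Ordinal hi) < a -> (y^-1)%g (Ordinal (ltnW hi)) < a) ->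
  Dm z (pcomp (sref n i) y) /\ Dm (pcomp (sref n i) z) (pcomp (sref n i) y).
Proof.
move=> D cond.
have ni : i != i.+1 by rewrite neq_ltn ltnSn.
have Ey1 := Nc_succ y (ltnW hi); have Ey2 := Nc_succ y hi.
have Ez1 := Nc_succ z (ltnW hi); have Ez2 := Nc_succ z hi.
have Esy1 := Nc_succ (pcomp (sref n i) y) (ltnW hi).
have Esz1 := Nc_succ (pcomp (sref n i) z) (ltnW hi).
have [iy1 iy2] := inv_sy hi y; have [iz1 iz2] := inv_sy hi z.
rewrite iy1 (Nc_s hi _ ni) in Esy1; rewrite iz1 (Nc_s hi _ ni) in Esz1.
have D1 := D i; have D2 := D i.+1; have D3 := D i.+2.
split=> c; (case: (eqVneq c i.+1) => [->|hc]; last by rewrite !(Nc_s hi _ hc) ?D);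
move: cond Ey1 Ey2 Ez1 Ez2 Esy1 Esz1 D1 D2 D3;
case: ((y^-1)%g (Ordinal hi) < a); case: ((y^-1)%g (Ordinal (ltnW hi)) < a);
case: ((z^-1)%g (Ordinal hi) < a); case: ((z^-1)%g (Ordinal (ltnW hi)) < a) => //= cond; lia.
Qed.

End Dom.

Section Stages.
Variables (n a : nat).
Local Open Scope ring_scope.
Implicit Types (w v y z : 'S_n) (g h : H n).

Definition good g y := forall z, g z != 0 -> Dm a z y.

Lemma good_step i (hi : (i.+1 < n)%N) g g' y :
  good g' y ->
  (((y^-1)%g (Ordinal hi) < a)%N -> ((y^-1)%g (Ordinal (ltnW hi)) < a)%N) ->
  (forall z, g z != 0 -> g' z != 0 \/ g' (pcomp (sref n i) z) != 0) ->
  good g (pcomp (sref n i) y).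
Proof.
move=> G cond S z /S [/G D|/G D].
  by have [] := @dom_step n a i hi y _ D cond.
have [_ D2] := @dom_step n a i hi y _ D cond.
by move: D2; rewrite compA sref_inv // comp1l.
Qed.

Lemma stage1 v g : good (foldr (@Ti_act n) g (redword v)) 1%g -> good g (v^-1)%g.
Proof.
move: v g; apply: (@word_ind n (fun v l => forall g, good (foldr (@Ti_act n) g l) 1%g -> good g (v^-1)%g))
  => [|w i l hi d hl IH] g /=; first by rewrite invg1.
rewrite foldr_rcons => /IH Gi.
have -> : (w^-1)%g = pcomp (sref n i) ((pcomp w (sref n i))^-1)%g.
  by rewrite inv_comp sref_invg // compA sref_inv // comp1l.
apply: good_step Gi _ _.
  rewrite invgK !comp_val s_oi s_oi1.
  by move=> h1; apply: leq_trans h1; apply: ltnW.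
by move=> z; apply: Ti_supp_inv.
Qed.

Lemma stage2 w y g : len (pcomp w y) = (len w + len y)%N -> good g y ->
  good (foldr (@Ti_act n) g (redword w)) (pcomp w y).
Proof.
move: w y g; apply: (@word_ind n (fun w l => forall y g, len (pcomp w y) = (len w + len y)%N -> good g y ->
  good (foldr (@Ti_act n) g l) (pcomp w y))) => [|w i l hi d hl IH] y g /=; first by rewrite comp1l.
move=> hadd Gg; rewrite foldr_rcons.
have [h1 h2 h3] := add_step hi hl hadd.
have -> : pcomp w y = pcomp (pcomp w (sref n i)) (pcomp (sref n i) y).
  by rewrite compA -(compA w) sref_inv // comp1.
apply: IH h3 _.
apply: good_step Gg _ _.
  by move=> h; apply: leq_trans h2 (ltnW h).
by move=> z; apply: Ti_supp.
Qed.

Lemma stage3 u g : (forall y, g y != 0 -> len (pcomp u y) = (len u + len y)%N) ->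
  forall z, foldr (@Ti_act n) g (redword u) z = g (pcomp (u^-1)%g z).
Proof.
move: u g; apply: (@word_ind n (fun u l => forall g, (forall y, g y != 0 -> len (pcomp u y) = (len u + len y)%N) ->
  forall z, foldr (@Ti_act n) g l z = g (pcomp (u^-1)%g z))) => [|u i l hi d hl IH] g /=.
  by move=> _ z; rewrite invg1 comp1l.
move=> S z; rewrite foldr_rcons.
have TiE : forall v, Ti_act i g v = g (pcomp (sref n i) v).
  move=> v; rewrite Ti_actE //.
  have ss : pcomp (sref n i) (pcomp (sref n i) v) = v by rewrite compA sref_inv // comp1l.
  case: ifP => hlt.
    case: (eqVneq (g v) 0) => [->|/S]; first by rewrite mulr0 addr0.
    by move=> /(add_step hi hl) [h1 _ _]; move: hlt; rewrite h1; lia.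
  case: (eqVneq (g (pcomp (sref n i) v)) 0) => [->|/S]; first by rewrite mulr0.
  move=> /(add_step hi hl) [h1 _ _]; rewrite ss in h1; move: hlt; rewrite h1 => /negbT; lia.
rewrite IH.
  rewrite TiE inv_comp sref_invg // compA (compA (sref n i)) sref_inv // comp1l.
  by [].
move=> y; rewrite TiE => /S /(add_step hi hl) [_ _].
by rewrite (compA (sref n i)) sref_inv // comp1l.
Qed.

End Stages.

Section Cols.
Variable n : nat.
Implicit Types (C : {set 'I_n}) (y z : 'S_n).

Definition sC C := [seq x <- enum 'I_n | x \in C].
Definition sC' C := [seq x <- enum 'I_n | x \notin C].

Lemma size_sC C : size (sC C) = #|C|.
Proof. by rewrite cardE /enum_mem /sC enumT. Qed.

Lemma sorted_enum : sorted (fun x y : 'I_n => x < y) (enum 'I_n).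
Proof. by have := iota_ltn_sorted 0 n; rewrite -val_enum_ord sorted_map. Qed.

Lemma sorted_sC C : sorted (fun x y : 'I_n => x < y) (sC C).
Proof. apply: sorted_filter; [exact: ltn_trans | exact: sorted_enum]. Qed.
Lemma sorted_sC' C : sorted (fun x y : 'I_n => x < y) (sC' C).
Proof. apply: sorted_filter; [exact: ltn_trans | exact: sorted_enum]. Qed.

Lemma uCE C k : uC C k = nth k (col_seq C) k.
Proof. by rewrite /uC permE. Qed.

Lemma uC_lo C (k : 'I_n) : k < #|C| -> uC C k = nth k (sC C) k.
Proof. by move=> hk; rewrite uCE /col_seq nth_cat -/(sC C) size_sC hk. Qed.

Lemma uC_hi C (k : 'I_n) : #|C| <= k -> uC C k = nth k (sC' C) (k - #|C|).
Proof. by move=> hk; rewrite uCE /col_seq nth_cat -/(sC C) size_sC ltnNge hk. Qed.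

Lemma size_sC' C : size (sC' C) = n - #|C|.
Proof.
have := count_predC (fun x => x \in C) (enum 'I_n).
rewrite -!size_filter size_enum_ord -/(sC C) size_sC => e.
have e2 : #|C| + size (sC' C) = n := e.
lia.
Qed.

Lemma uC_in C (k : 'I_n) : (uC C k \in C) = (k < #|C|).
Proof.
case: (ltnP k #|C|) => hk.
  rewrite uC_lo //.
  have : nth k (sC C) k \in sC C by rewrite mem_nth // size_sC.
  by rewrite mem_filter => /andP [].
rewrite uC_hi //.
have : nth k (sC' C) (k - #|C|) \in sC' C.
  rewrite mem_nth // size_sC'; have := ltn_ord k; lia.
by rewrite mem_filter => /andP [/negbTE].
Qed.

Lemma uC_mono C (k1 k2 : 'I_n) : k1 < k2 -> (k2 < #|C|) || (#|C| <= k1) -> uC C k1 < uC C k2.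
Proof.
move=> lt /orP [h|h].
  rewrite !uC_lo //; last by apply: ltn_trans h.
  rewrite (set_nth_default k2 k1); last by rewrite size_sC; apply: ltn_trans h.
  have tr : transitive (fun x y : 'I_n => x < y) by move=> ???; apply: ltn_trans.
  apply: (sorted_ltn_nth tr k2 (sorted_sC C)) => //; rewrite inE size_sC //; exact: ltn_trans h.
rewrite !uC_hi //; last by apply: leq_trans h (ltnW lt).
have hk2 := ltn_ord k2.
rewrite (set_nth_default k2 k1); last by rewrite size_sC'; lia.
have tr : transitive (fun x y : 'I_n => x < y) by move=> ???; apply: ltn_trans.
apply: (sorted_ltn_nth tr k2 (sorted_sC' C)); rewrite ?inE ?size_sC' //; lia.
Qed.

Lemma centry_uC C i d (hi : i < n) : i < #|C| -> centry C i d = uC C (Ordinal hi).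
Proof.
move=> hC; rewrite uC_lo //= /centry -/(sC C).
by apply: set_nth_default; rewrite size_sC.
Qed.

Lemma stabE b y (j : 'I_n) : stab_varpi b y -> (y j < b) = (j < b).
Proof. by move=> /forallP /(_ j) /eqP. Qed.

Lemma sum_lt m : m <= n -> \sum_(k : 'I_n) (k < m) = m.
Proof.
elim: m => [|m IH] hm; first by rewrite big1.
have -> : \sum_(k : 'I_n) (k < m.+1) = \sum_(k : 'I_n) ((k < m) + (k == Ordinal hm :> 'I_n)).
  apply: eq_bigr => k _; rewrite -val_eqE /= ltnS leq_eqVlt.
  by case: ltngtP => //= ->; rewrite ltnn.
rewrite big_split /= IH ?(ltnW hm) // (bigD1 (Ordinal hm)) //= eqxx big1 ?addn0 ?addn1 //.
by move=> k /negbTE ->.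
Qed.

End Cols.

Section Final.
Variable n : nat.
Implicit Types (y z w : 'S_n).

Lemma len1 : len (1%g : 'S_n) = 0.
Proof. by rewrite lenE big1 // => p _; rewrite !perm1; case: ltngtP. Qed.

Lemma len_block (F : {set 'I_n}) y : stab_varpi #|F| y ->
  len (pcomp (uC F) y) = len (uC F) + len y.
Proof.
move: y; apply: (@word_ind n (fun y _ => stab_varpi #|F| y -> len (pcomp (uC F) y) = len (uC F) + len y))
  => [|y i l hi d hl IH] st; first by rewrite comp1 len1 addn0.
set b := #|F| in st IH *.
have s1 := stabE (Ordinal hi) st; have s0 := stabE (Ordinal (ltnW hi)) st; rewrite /= in s1 s0.
have blk : (i.+1 < b) || (b <= i).
  case: (ltnP i.+1 b) => //= h1; rewrite leqNgt; apply/negP => h2.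
  have : b = i.+1 by lia.
  move=> eb; move: s1 s0; rewrite eb ltnn ltnSn => s1 s0; move: d; lia.
have st' : stab_varpi b (pcomp y (sref n i)).
  apply/forallP => j; rewrite comp_val stabE // sref_val // /sv.
  apply/eqP; case: (nat_of_ord j =P i) => [->|_]; [|case: (nat_of_ord j =P i.+1) => [->|_]] => //;
  by case/orP: blk => h; apply/idP/idP => h'; lia.
have IH' := IH st'.
have := lenRS hi (pcomp (uC F) (pcomp y (sref n i))).
rewrite !comp_val s_oi s_oi1 -compA -(compA y) sref_inv // comp1.
have mono : uC F (y (Ordinal hi)) < uC F (y (Ordinal (ltnW hi))).
  apply: uC_mono => //; move: blk => /orP [h|h]; apply/orP; [left|right]; lia.
rewrite mono ltnNge (ltnW mono) /= IH'; lia.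
Qed.

Lemma Dm_trans a z w u : Dm a z w -> Dm a w u -> Dm a z u.
Proof. by move=> h1 h2 c; apply: leq_trans (h2 c) (h1 c). Qed.

Lemma Dm_stab a y : stab_varpi a y -> Dm a y 1%g.
Proof.
move=> st c; apply: eq_leq; rewrite /Nc.
rewrite [LHS](reindex_inj (@perm_inj _ y)) /=.
by apply: eq_bigr => k _; rewrite perm1 stabE.
Qed.

Lemma semi_of_dom a (G E : {set 'I_n}) y :
  #|E| = a -> a <= #|G| -> stab_varpi #|G| y ->
  Dm a (pcomp (uC G) y) (uC E) -> semistandard G E.
Proof.
move=> hE hab st D i d hi; subst a.
have hin : i < n by apply: leq_trans hi _; rewrite -[X in _ <= X](card_ord n); exact: max_card.
have hiG : i < #|G| by apply: leq_trans hi hab.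
rewrite (centry_uC d hin hi) (centry_uC d hin hiG).
rewrite leqNgt; apply/negP => lt.
set e := uC E (Ordinal hin) in lt.
have lo : i.+1 <= Nc #|E| (uC E) e.+1.
  rewrite -{1}(sum_lt hin); apply: leq_sum => k _.
  case: (ltnP k i.+1) => //= hk; rewrite lt0b.
  rewrite (leq_trans hk hi) /= ltnS /e.
  case: (ltngtP k i) => [hk'|hk'|ek]; first by apply: ltnW; apply: uC_mono => //=; rewrite hi.
    by move: hk hk'; lia.
  by rewrite (_ : k = Ordinal hin) //; apply: val_inj.
have hi2 : \sum_(k : 'I_n) ((k < #|G|) && (uC G k < e.+1)) <= i.
  rewrite -[X in _ <= X](sum_lt (ltnW hin)); apply: leq_sum => k _.
  case: (ltnP k i) => hk /=; first by case: (_ && _).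
  rewrite leqn0 eqb0; apply/negP => /andP [hkG].
  rewrite ltnS leqNgt => /negP; apply.
  case: (ltngtP k i) => [hk'|hk'|ek]; first by move: hk hk'; lia.
    by apply: leq_trans lt _; apply: ltnW; apply: uC_mono => //=; rewrite hkG.
  by rewrite (_ : k = Ordinal hin) //; apply: val_inj.
have hi3 : Nc #|E| (pcomp (uC G) y) e.+1 <= \sum_(k : 'I_n) ((k < #|G|) && (uC G k < e.+1)).
  rewrite [X in _ <= X](reindex_inj (@perm_inj _ y)) /=.
  apply: leq_sum => k _; rewrite comp_val (stabE k st).
  by case: (ltnP k #|E|) => //= hk; rewrite (leq_trans hk hab).
have := D e.+1; lia.
Qed.


Lemma col_eq b (F G : {set 'I_n}) q y : #|F| = b -> #|G| = b ->
  stab_varpi b q -> stab_varpi b y -> pcomp (uC F) q = pcomp (uC G) y -> G = F.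
Proof.
move=> hF hG sq sy e; apply/eqP; rewrite eqEcard hF hG leqnn andbT.
apply/subsetP => j jG.
have hm : ((uC G)^-1)%g j < b by rewrite -hG -uC_in permKV.
set k := (y^-1)%g (((uC G)^-1)%g j).
have hk : k < b by rewrite -(stabE k sy) /k permKV.
have : uC G (y k) = uC F (q k) by rewrite -!comp_val e.
rewrite /k !permKV => ->.
by rewrite uC_in hF (stabE k sq).
Qed.

End Final.

Unset Implicit Arguments.
Local Open Scope ring_scope.

Lemma compKV n (u w : 'S_n) : pcomp u (pcomp (u^-1)%g w) = w.
Proof. by rewrite compA /Defs.comp mulVg mulg1. Qed.
Lemma compVK n (u w : 'S_n) : pcomp (u^-1)%g (pcomp u w) = w.
Proof. by rewrite compA /Defs.comp mulgV mulg1. Qed.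

Lemma hmulT n (v : 'S_n) (g : H n) : hmul (T v) g = Tw_act v g.
Proof.
rewrite /hmul (bigD1 v) //= big1 => [|w hw].
  by rewrite addr0; apply/ffunP => z; rewrite !ffunE eqxx mul1r.
by apply/ffunP => z; rewrite !ffunE (negbTE hw) mul0r.
Qed.

Theorem proposition5p2 (n a b : nat) (E : {set 'I_n}) (h x : H n)
    (hF : {set 'I_n} -> H n) :
  (1 <= a)%N -> (a <= b)%N -> (b <= n)%N ->
  #|E| = a ->
  laurentH h -> Hpar a h ->
  (* x = (T_{u_E^{-1}})^{-1} *)
  hmul (T (uC E)^-1%g) x = hone n -> hmul x (T (uC E)^-1%g) = hone n ->
  (forall F : {set 'I_n}, #|F| = b -> laurentH (hF F) /\ Hpar b (hF F)) ->
  hsc (tt ^+ len (uC E)) (hmul x h)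
    = \sum_(F : {set 'I_n} | #|F| == b) hmul (T (uC F)) (hF F) ->
  forall F : {set 'I_n}, #|F| = b -> ~ semistandard F E -> hF F = 0.
Proof.
move=> ha hab hbn hE lh ph Hx1 _ hFp Heq F0 hF0 nss.
set u := uC E.
have Gx : good a x u.
  rewrite /u -[uC E]invgK; apply: stage1.
  move: Hx1; rewrite hmulT /Tw_act => ->.
  move=> z; rewrite ffunE; case: (eqVneq z 1%g) => [-> _ c //|_].
  by rewrite /= eqxx.
have Gh : good a h 1%g.
  move=> y hy; apply: Dm_stab; apply/negPn/negP => ns.
  by move: hy; rewrite (ph y ns) eqxx.
have Gxh : good a (hmul x h) u.
  move=> z; rewrite /hmul sum_ffunE.
  case: (pickP (fun w => x w * Tw_act w h z != 0)) => [w|none]; last first.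
    by rewrite big1 ?eqxx // => w _; rewrite ffunE; apply/eqP; have := none w => /negbFE.
  rewrite mulf_eq0 negb_or => /andP [xw hw] _.
  apply: Dm_trans (Gx w xw).
  have := @stage2 n a w 1%g h; rewrite comp1 len1 addn0 => /(_ erefl Gh); apply.
  exact: hw.
apply/ffunP => y; rewrite [RHS]ffunE.
case st: (stab_varpi b y); last by apply: (hFp F0 hF0).2; rewrite st.
set z := pcomp (uC F0) y.
have := congr1 (fun f : H n => f z) Heq.
rewrite [in X in X = _ -> _]ffunE [in X in _ = X -> _]sum_ffunE.
rewrite [in X in _ = X -> _](bigD1 F0) ?hF0 ?eqxx //.
rewrite [in X in _ = X -> _]big1 ?addr0; last first.
  move=> F /andP [/eqP hFb hne]; rewrite hmulT /Tw_act stage3.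
    apply/eqP; apply/negP => nz.
    have sq : stab_varpi b (pcomp ((uC F)^-1)%g z).
      by apply/negPn/negP => ns; move: nz; rewrite (hFp F hFb).2 ?eqxx.
    have := col_eq hFb hF0 sq (st : stab_varpi b y).
    rewrite compKV => /(_ erefl) eF.
    by move: hne; rewrite eF eqxx.
  move=> y' nz; apply: len_block.
  rewrite hFb; by apply/negPn/negP => ns; move: nz; rewrite (hFp F hFb).2 ?eqxx.
rewrite hmulT /Tw_act stage3; last first.
  move=> y' nz; apply: len_block.
  rewrite hF0; by apply/negPn/negP => ns; move: nz; rewrite (hFp F0 hF0).2 ?eqxx.
rewrite /z compVK /= addr0 => <-.
case: (eqVneq (hmul x h z) 0) => [->|nz]; first by rewrite mulr0.
exfalso; apply: nss.
apply: (semi_of_dom hE) (Gxh z nz); rewrite ?hF0 //.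
Qed.
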